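(* Let $p$ be a prime and $Q\in\mathbb{Q}_p[X_1,\dots,X_n]$ any quadratic form. Then the following are equivalent: (i) $R(Q(\mathbb{N}^n))$ is dense in $\mathbb{Q}_p$; (ii) $R(Q(\mathbb{Z}^n))$ is dense in $\mathbb{Q}_p$; (iii) $R(Q(\mathbb{Z}_p^n))$ is dense in $\mathbb{Q}_p$.
   Context: $\mathbb{N}$ denotes the nonnegative integers, $\mathbb{Z}_p$ the $p$-adic integers, and $\mathbb{Q}_p$ carries the $p$-adic topology. A quadratic form is a homogeneous polynomial of degree two, not all coefficients zero. For a subset $A$ of a field, $R(A)=\{a/b: a,b\in A,\ b\neq 0\}$. For $S\subseteq\mathbb{Q}_p^n$, $Q(S)=\{Q(\mathbf{x}):\mathbf{x}\in S\}$. *)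

(* Defs.v *)
From HB Require Import structures.
From mathcomp Require Import all_boot all_order all_algebra.
From mathcomp Require Import mpoly.
Set Implicit Arguments. Unset Strict Implicit. Unset Printing Implicit Defensive.
Import Order.TTheory GRing.Theory Num.Theory.
Local Open Scope ring_scope.

(* The field Q_p is introduced through its defining (universal) description:
   a field K with a discrete valuation v : K -> int (the value at 0 is
   irrelevant and never used) such that
   - v is multiplicative and satisfies the ultrametric inequality,
   - v (p) = 1 (so v restricted to Q is the p-adic valuation v_p),
   - K is complete for the v-adic metric,
   - Q is dense in K.
   Such a valued field is the completion of (Q, v_p), i.e. it is Q_p
   (unique up to unique isometric isomorphism).  *)

(* "x and y are close at level k" : |x - y|_p <= p^-k, i.e. v(x-y) >= k. *)
Definition vclose (K : fieldType) (v : K -> int) (k : int) (x y : K) : Prop :=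
  x = y \/ k <= v (x - y).

Definition is_padic_field (p : nat) (K : fieldType) (v : K -> int) : Prop :=
  [/\ (forall x y : K, x != 0 -> y != 0 -> v (x * y) = v x + v y),
      (forall x y : K, x != 0 -> y != 0 -> x + y != 0 ->
          Num.min (v x) (v y) <= v (x + y)),
      (p%:R : K) != 0 /\ v p%:R = 1,
      (forall u : nat -> K,
          (forall k : int, exists N : nat, forall m n : nat,
              (N <= m)%N -> (N <= n)%N -> vclose v k (u m) (u n)) ->
          exists l : K, forall k : int, exists N : nat, forall n : nat,
              (N <= n)%N -> vclose v k (u n) l) &
      (forall (x : K) (k : int), exists q : rat, vclose v k x (ratr q))].

Definition in_Zp (K : fieldType) (v : K -> int) (x : K) : Prop :=
  x = 0 \/ 0 <= v x.

Definition vdense (K : fieldType) (v : K -> int) (A : K -> Prop) : Prop :=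
  forall (x : K) (k : int), exists a : K, A a /\ vclose v k a x.

Definition ratio_set (K : fieldType) (A : K -> Prop) : K -> Prop :=
  fun z => exists a b : K, [/\ A a, A b, b != 0 & z = a / b].

Definition qvalues_N (K : fieldType) (n : nat) (Q : {mpoly K[n]}) : K -> Prop :=
  fun z => exists x : 'I_n -> nat, z = Q.@[fun i => (x i)%:R].

Definition qvalues_Z (K : fieldType) (n : nat) (Q : {mpoly K[n]}) : K -> Prop :=
  fun z => exists x : 'I_n -> int, z = Q.@[fun i => (x i)%:~R].

Definition qvalues_Zp (K : fieldType) (v : K -> int) (n : nat)
  (Q : {mpoly K[n]}) : K -> Prop :=
  fun z => exists x : 'I_n -> K, (forall i, in_Zp v (x i)) /\ z = Q.@[x].

Definition quadratic_form (K : fieldType) (n : nat) (Q : {mpoly K[n]}) : Prop :=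
  Q != 0 /\ Q \is 2.-homog.

(* Main.v *)
Require Import Defs.
From HB Require Import structures.
From mathcomp Require Import all_boot all_order all_algebra.
From mathcomp Require Import mpoly.
From mathcomp Require Import zify ring.
Set Implicit Arguments. Unset Strict Implicit. Unset Printing Implicit Defensive.
Import Order.TTheory GRing.Theory Num.Theory.
Local Open Scope ring_scope.

Section Padic.
Variables (p : nat) (K : fieldType) (v : K -> int).
Hypothesis hp : prime p.
Hypothesis hK : is_padic_field p v.

Definition I (j : int) (z : K) := z = 0 \/ j <= v z.

Lemma vM x y : x != 0 -> y != 0 -> v (x * y) = v x + v y.
Proof. by have [h _ _ _ _] := hK; apply: h. Qed.

Lemma vU x y : x != 0 -> y != 0 -> x + y != 0 -> Num.min (v x) (v y) <= v (x + y).
Proof. by have [_ h _ _ _] := hK; apply: h. Qed.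

Lemma v1 : v 1 = 0.
Proof. have := vM (oner_neq0 K) (oner_neq0 K); rewrite mulr1 => h. set a := v 1 in h *; lia. Qed.

Lemma vN1 : v (-1) = 0.
Proof.
have h1 : (-1 : K) != 0 by rewrite oppr_eq0 oner_neq0.
have := vM h1 h1; rewrite mulrNN mulr1 v1 => h; lia.
Qed.

Lemma vN x : x != 0 -> v (- x) = v x.
Proof.
move=> hx; have h1 : (-1 : K) != 0 by rewrite oppr_eq0 oner_neq0.
by rewrite -mulN1r vM // vN1 add0r.
Qed.

Lemma vV x : x != 0 -> v (x^-1) = - v x.
Proof.
move=> hx; have hx' : x^-1 != 0 by rewrite invr_eq0.
have := vM hx hx'; rewrite mulfV // v1 => h; lia.
Qed.

Lemma I0 j : I j 0. Proof. by left. Qed.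

Lemma IN j z : I j z -> I j (- z).
Proof.
case=> [->|h]; first by rewrite oppr0; left.
case: (eqVneq z 0) => [->|hz]; first by rewrite oppr0; left.
by right; rewrite vN.
Qed.

Lemma ID j z w : I j z -> I j w -> I j (z + w).
Proof.
case=> [->|hz]; first by rewrite add0r.
case=> [->|hw]; first by rewrite addr0; right.
case: (eqVneq z 0) => [->|z0]; first by rewrite add0r; right.
case: (eqVneq w 0) => [->|w0]; first by rewrite addr0; right.
case: (eqVneq (z + w) 0) => [->|zw0]; first by left.
right; apply: le_trans (vU z0 w0 zw0).
by rewrite le_min hz hw.
Qed.

Lemma IB j z w : I j z -> I j w -> I j (z - w).
Proof. by move=> hz hw; apply: ID => //; apply: IN. Qed.

Lemma Ile j j' z : j' <= j -> I j z -> I j' z.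
Proof. by move=> hj [->|h]; [left|right; apply: le_trans h]. Qed.

Lemma IM j l z w : I j z -> I l w -> I (j + l) (z * w).
Proof.
case=> [->|hz]; first by rewrite mul0r; left.
case=> [->|hw]; first by rewrite mulr0; left.
case: (eqVneq z 0) => [->|z0]; first by rewrite mul0r; left.
case: (eqVneq w 0) => [->|w0]; first by rewrite mulr0; left.
by right; rewrite vM // lerD.
Qed.

Lemma Iv z : z != 0 -> I (v z) z.
Proof. by right. Qed.

Lemma IV z : z != 0 -> I (- v z) z^-1.
Proof. by move=> hz; right; rewrite vV. Qed.

Lemma vcloseI k x y : vclose v k x y <-> I k (x - y).
Proof.
rewrite /vclose /I; split; case=> [h|h]; try by right.
- by left; rewrite h subrr.
- by left; apply/eqP; rewrite -subr_eq0; apply/eqP.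
Qed.


Lemma I01 : I 0 1. Proof. by right; rewrite v1. Qed.

Lemma Inat (m : nat) : I 0 m%:R.
Proof.
elim: m => [|m IH]; first exact: I0.
by rewrite mulrSr; apply: ID IH I01.
Qed.

Lemma Iint (z : int) : I 0 z%:~R.
Proof.
case: z => m; first exact: Inat.
by rewrite NegzE mulrNz; apply: IN; apply: Inat.
Qed.

Lemma vp : (p%:R : K) != 0 /\ v p%:R = 1.
Proof. by have [_ _ h _ _] := hK. Qed.

Lemma Ipe (e : nat) : (p%:R : K) ^+ e != 0 /\ v (p%:R ^+ e) = e%:Z.
Proof.
have [p0 vp1] := vp.
elim: e => [|e [h1 h2]]; first by rewrite expr0 v1 oner_neq0.
rewrite exprS mulf_neq0 // vM // vp1 h2; split => //; lia.
Qed.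

Lemma not_I1 (z : int) : ~~ (p %| `|z|)%N -> ~ I 1 z%:~R.
Proof.
move=> hz h.
have cop : coprimez (Posz p) z by rewrite coprimezE /= prime_coprime.
have [u [w e]] := Bezoutz (Posz p) z.
move: cop; rewrite /coprimez => /eqP g1; rewrite g1 in e.
have e' : (u%:~R * p%:R + w%:~R * z%:~R : K) = 1.
  by rewrite -[(p%:R : K)]/((Posz p)%:~R) -!intrM -intrD e.
have [p0 vp1] := vp.
have h1 : I 1 (1 : K).
  rewrite -e'; apply: ID.
  - by apply: (Ile (j := 0 + 1)); [rewrite add0r|apply: IM (Iint u) _; right; rewrite vp1].
  - by apply: (Ile (j := 0 + 1)); [rewrite add0r|apply: IM (Iint w) h].
case: h1 => [/eqP|]; first by rewrite oner_eq0.
by rewrite v1.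
Qed.

Lemma v_cop (z : int) : ~~ (p %| `|z|)%N -> z%:~R != 0 :> K /\ v z%:~R = 0.
Proof.
move=> hz; have hn := not_I1 hz.
case: (Iint z) => [h|h]; first by case: hn; left.
have z0 : z%:~R != 0 :> K by apply/eqP => h0; apply: hn; left.
split => //; apply/eqP; rewrite eq_le h andbT.
by rewrite leNgt; apply/negP => h1; apply: hn; right.
Qed.

Lemma I_dvd (j : nat) (a : int) : I j%:Z a%:~R -> (p ^ j %| `|a|)%N.
Proof.
elim: j a => [|j IH] a h; first by rewrite expn0 dvd1n.
have pa : (p %| `|a|)%N.
  apply/negP => /negP hn; apply: (not_I1 hn); apply: Ile h; lia.
have pa' : (Posz p %| a)%Z by rewrite dvdzE.
have ea := divzK pa'; set a1 := (a %/ Posz p)%Z in ea.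
have [p0 vp1] := vp.
have h1 : I j%:Z a1%:~R.
  case: (eqVneq (a1%:~R : K) 0) => [->|a10]; first exact: I0.
  right; move: h; rewrite -ea intrM.
  case=> [/eqP|]; first by rewrite mulf_eq0 (negbTE a10) /= (negbTE p0).
  rewrite -[((Posz p)%:~R : K)]/(p%:R : K) vM // vp1.
  set t := v _; lia.
have := IH _ h1; rewrite -ea abszM /= expnSr => hd.
by rewrite dvdn_mul.
Qed.


Lemma approx_nat (x : K) (k : int) : I 0 x -> exists m : nat, I k (x - m%:R).
Proof.
wlog hk : k / 1 <= k.
  move=> H hx; have [|m hm] := H (Num.max k 1) _ hx; first by rewrite le_max lexx orbT.
  by exists m; apply: Ile hm; rewrite le_max lexx.
move=> hx.
have [_ _ _ _ dens] := hK; have [q /vcloseI hq] := dens x k.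
set X := ratr q in hq.
have hX : I 0 X.
  have -> : X = x - (x - X) by rewrite opprB addrC subrK.
  apply: (@IB 0 x (x - X) hx); apply: Ile hq; lia.
pose a := numq q.
have dgt0 := denq_gt0 q.
pose dn := `|denq q|%N.
have edn : denq q = dn%:Z by rewrite /dn gtz0_abs.
have dn0 : (0 < dn)%N by rewrite /dn absz_gt0 gt_eqF.
have [d' cop edn'] := pfactor_coprime hp dn0.
set e := logn p dn in edn'.
have hd' : ~~ (p %| `|Posz d'|)%N by rewrite /= -prime_coprime.
have [d0 vd] := v_cop hd'.
have [pe0 vpe] := Ipe e.
have eD : ((denq q)%:~R : K) = d'%:R * p%:R ^+ e.
  by rewrite edn edn' -natrX -natrM.
have D0 : ((denq q)%:~R : K) != 0 by rewrite eD mulf_neq0.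
have eX : X = a%:~R / (denq q)%:~R by [].
have ea : (a%:~R : K) = X * (denq q)%:~R by rewrite eX divfK.
have Ia : I e%:Z a%:~R.
  rewrite ea eD mulrA; apply: (Ile (j := 0 + 0 + e%:Z)); first by rewrite !add0r.
  apply: (@IM (0 + 0) e%:Z (X * d'%:R)); last by right; rewrite vpe.
  by apply: (@IM 0 0 X); [|right; rewrite vd].
have hdv := I_dvd Ia.
have hdv' : (Posz (p ^ e) %| a)%Z by rewrite dvdzE.
have ea1 := divzK hdv'; set a1 := (a %/ Posz (p ^ e))%Z in ea1.
have eXd : X * d'%:R = a1%:~R.
  apply: (mulIf pe0); rewrite -mulrA -eD -ea -ea1 intrM.
  by rewrite -[((Posz (p ^ e))%:~R : K)]/((p ^ e)%:R : K) natrX.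
pose kn := `|k|%N.
have ek : k = kn%:Z by rewrite /kn gez0_abs //; lia.
pose P := (p ^ kn)%N.
have copP : coprimez (Posz d') (Posz P).
  by rewrite coprimezE /= coprime_sym coprimeXl.
have [u [w eB]] := Bezoutz (Posz d') (Posz P).
move: copP; rewrite /coprimez => /eqP g1; rewrite g1 in eB.
have eB' : (u%:~R * d'%:R + w%:~R * P%:R : K) = 1.
  by rewrite -[(d'%:R : K)]/((Posz d')%:~R) -[(P%:R : K)]/((Posz P)%:~R) -!intrM -intrD eB.
pose m := (a1 * u)%Z.
have eXm : X - m%:~R = a1%:~R * w%:~R * P%:R / d'%:R.
  have -> : X = a1%:~R / d'%:R by rewrite -eXd mulfK.
  rewrite /m intrM.
  have eWP : (w%:~R * P%:R : K) = 1 - u%:~R * d'%:R by apply: (addrI (u%:~R * d'%:R)); rewrite eB'; ring.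
  rewrite -(mulrA (a1%:~R)) eWP.
  by field.
have [P0 vP] := Ipe kn.
have IXm : I k (X - m%:~R).
  rewrite eXm; apply: (Ile (j := 0 + 0 + kn%:Z + - 0)); first by rewrite ek; lia.
  apply: IM; last by rewrite -vd; apply: IV.
  apply: IM; first by apply: IM; apply: Iint.
  by rewrite /P natrX; right; rewrite vP.
have Pn0 : Posz P != 0 by rewrite /P eqz_nat expn_eq0 negb_and -lt0n prime_gt0.
have r0 := modz_ge0 m Pn0.
pose r := `|(m %% Posz P)%Z|%N.
have er : (m %% Posz P)%Z = r%:Z by rewrite /r gez0_abs.
exists r.
have em := divz_eq m (Posz P); rewrite er in em.
have -> : x - r%:R = (x - X) + (X - m%:~R) + (m %/ Posz P)%Z%:~R * P%:R.
  rewrite {1}em intrD intrM /=.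
  rewrite -[(P%:R : K)]/((Posz P)%:~R) -[(r%:R : K)]/((Posz r)%:~R).
  by ring.
apply: ID; first by apply: ID.
apply: (Ile (j := 0 + kn%:Z)); first by rewrite ek add0r.
by apply: IM; [apply: Iint|rewrite /P natrX; right; rewrite vP].
Qed.


Definition Rk (k : int) (a b : K) := [/\ I 0 a, I 0 b & I k (a - b)].

Lemma Rmul k a a' b b' : 0 <= k -> Rk k a a' -> Rk k b b' -> Rk k (a * b) (a' * b').
Proof.
move=> hk [ha ha' hd] [hb hb' he]; split.
- by apply: (Ile (j := 0 + 0)); [rewrite addr0|apply: (@IM 0 0 a b)].
- by apply: (Ile (j := 0 + 0)); [rewrite addr0|apply: (@IM 0 0 a' b')].
have -> : a * b - a' * b' = a * (b - b') + (a - a') * b' by ring.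
apply: ID.
- by apply: (Ile (j := 0 + k)); [rewrite add0r|apply: (@IM 0 k a (b - b'))].
- by apply: (Ile (j := k + 0)); [rewrite addr0|apply: (@IM k 0 (a - a') b')].
Qed.

Lemma R1 k : Rk k 1 1.
Proof. by split; [apply: I01|apply: I01|rewrite subrr; apply: I0]. Qed.

Lemma Rexp k a b m : 0 <= k -> Rk k a b -> Rk k (a ^+ m) (b ^+ m).
Proof.
move=> hk h; elim: m => [|m IH]; first by rewrite !expr0; apply: R1.
by rewrite !exprS; apply: Rmul.
Qed.

Lemma Rprod k n (x y : 'I_n -> K) (m : 'I_n -> nat) : 0 <= k ->
  (forall i, Rk k (x i) (y i)) ->
  Rk k (\prod_i x i ^+ m i) (\prod_i y i ^+ m i).
Proof.
move=> hk h.
apply: (big_ind2 (Rk k)); first exact: R1.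
- by move=> ? ? ? ? ; apply: Rmul.
- by move=> i _; apply: Rexp.
Qed.

Definition wv (z : K) : int := if z == 0 then 0 else v z.

Lemma Iw z : I (wv z) z.
Proof. by rewrite /wv; case: eqP => [->|_]; [left|right]. Qed.

Lemma poly_cont n (P : {mpoly K[n]}) : exists c : int, forall k x y, 0 <= k ->
  (forall i, Rk k (x i) (y i)) -> I (k + c) (P.@[x] - P.@[y]).
Proof.
suff H : forall s : seq 'X_{1..n}, exists c : int, forall k x y, 0 <= k ->
  (forall i, Rk k (x i) (y i)) ->
  I (k + c) (\sum_(m <- s) P@_m * \prod_i x i ^+ m i - \sum_(m <- s) P@_m * \prod_i y i ^+ m i).
  by have [c hc] := H (msupp P); exists c => k x y hk hxy; rewrite !mevalE; apply: hc.
elim=> [|m s [c hc]].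
  by exists 0 => k x y _ _; rewrite !big_nil subrr; left.
exists (Num.min (wv P@_m) c) => k x y hk hxy; rewrite !big_cons.
have -> : P@_m * \prod_i x i ^+ m i + \sum_(j <- s) P@_j * \prod_i x i ^+ j i -
   (P@_m * \prod_i y i ^+ m i + \sum_(j <- s) P@_j * \prod_i y i ^+ j i) =
   P@_m * (\prod_i x i ^+ m i - \prod_i y i ^+ m i) +
   (\sum_(j <- s) P@_j * \prod_i x i ^+ j i - \sum_(j <- s) P@_j * \prod_i y i ^+ j i).
  by ring.
apply: ID.
- apply: (Ile (j := wv P@_m + k)); first by move: (ge_min (wv P@_m) (wv P@_m) c); rewrite lexx /=; set t := Num.min _ _; set w := wv _; lia.
  apply: IM; first exact: Iw.
  by have [_ _ h] := Rprod m hk hxy.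
- apply: Ile (hc k x y hk hxy); rewrite lerD2l ge_min lexx orbT //.
Qed.


Lemma vstable z d j : z != 0 -> I j d -> v z < j -> z + d != 0 /\ v (z + d) = v z.
Proof.
move=> z0 hd hj.
case: (eqVneq d 0) => [->|d0]; first by rewrite addr0.
have vd : j <= v d by case: hd => // /eqP; rewrite (negbTE d0).
have zd0 : z + d != 0.
  apply/eqP => /eqP; rewrite addr_eq0 => /eqP ez.
  move: vd hj; rewrite ez vN //; set t := v z; lia.
split => //.
have h1 := vU z0 d0 zd0.
have nd0 : - d != 0 by rewrite oppr_eq0.
have h2 := vU zd0 nd0; rewrite addrK vN // in h2.
move: h1 (h2 z0) vd hj; set a := v z; set b := v d; set c := v (z + d); lia.
Qed.

Lemma ratio_close a b a' b' k K1 : 0 <= k -> b != 0 ->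
  k + `|wv a| + `|wv b| + 2 * `|v b| + 1 <= K1 ->
  I K1 (a' - a) -> I K1 (b' - b) -> b' != 0 /\ I k (a' / b' - a / b).
Proof.
move=> hk b0 hK1 ha hb.
have [b'0 vb'] : b' != 0 /\ v b' = v b.
  have := vstable b0 hb; rewrite addrC subrK; apply.
  move: hK1; set t := v b; set t1 := wv a; set t2 := wv b; lia.
split => //.
have -> : a' / b' - a / b = ((a' - a) * b - a * (b' - b)) * b^-1 * b'^-1 by field; rewrite b0 b'0.
pose L := K1 - `|wv a| - `|wv b|.
apply: (@Ile (L + - v b + - v b') k).
  rewrite vb' /L; move: hK1; set t := v b; set t1 := wv a; set t2 := wv b; lia.
apply: IM; last exact: IV.
apply: IM; last exact: IV.
apply: IB.
- apply: (Ile (j := K1 + wv b)); first by rewrite /L; set t1 := wv a; set t2 := wv b; lia.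
  by apply: IM => //; apply: Iw.
- apply: (Ile (j := wv a + K1)); first by rewrite /L; set t1 := wv a; set t2 := wv b; lia.
  by apply: IM => //; apply: Iw.
Qed.

End Padic.

Theorem lemma1 (p : nat) (K : fieldType) (v : K -> int)
  (hp : prime p) (hK : is_padic_field p v)
  (n : nat) (Q : {mpoly K[n]}) (hQ : quadratic_form Q) :
  [<-> vdense v (ratio_set (qvalues_N Q));
       vdense v (ratio_set (qvalues_Z Q));
       vdense v (ratio_set (qvalues_Zp v Q))].
Proof.
split; [|split].
- move=> H z k.
  have [r [[a [b [[xa ea] [xb eb] b0 er]]] hc]] := H z k.
  exists r; split => //; exists a, b; split => //.
  + by exists (fun i => Posz (xa i)).
  + by exists (fun i => Posz (xb i)).
- move=> H z k.
  have [r [[a [b [[xa ea] [xb eb] b0 er]]] hc]] := H z k.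
  exists r; split => //; exists a, b; split => //.
  + by exists (fun i => (xa i)%:~R); split => // i; apply: (Iint hp hK).
  + by exists (fun i => (xb i)%:~R); split => // i; apply: (Iint hp hK).
- move=> H z k.
  pose k0 := Num.max k 0.
  have hk0 : 0 <= k0 by rewrite le_max lexx orbT.
  have [r [[a [b [[xa [hxa ea]] [xb [hxb eb]] b0 er]]] hc]] := H z k0.
  have [c hcont] := poly_cont hp hK Q.
  pose K1 := k0 + `|wv v a| + `|wv v b| + 2 * `|v b| + 1.
  pose L := Num.max 0 (K1 - c).
  have hL : 0 <= L by rewrite le_max lexx.
  have [ma hma] := fin_all_exists (fun i => approx_nat hp hK L (hxa i)).
  have [mb hmb] := fin_all_exists (fun i => approx_nat hp hK L (hxb i)).
  pose a' := Q.@[fun i => (ma i)%:R].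
  pose b' := Q.@[fun i => (mb i)%:R].
  have ha : I v K1 (a' - a).
    have := hcont L (fun i => (ma i)%:R) xa hL (fun i => And3 (Inat hp hK (ma i)) (hxa i)
       (eq_ind _ (I v L) (IN hp hK (hma i)) _ (opprB _ _))).
    rewrite -ea; apply: Ile.
    rewrite /L; set t := K1; lia.
  have hb : I v K1 (b' - b).
    have := hcont L (fun i => (mb i)%:R) xb hL (fun i => And3 (Inat hp hK (mb i)) (hxb i)
       (eq_ind _ (I v L) (IN hp hK (hmb i)) _ (opprB _ _))).
    rewrite -eb; apply: Ile.
    rewrite /L; set t := K1; lia.
  have [b'0 hcl] := ratio_close hp hK hk0 b0 (lexx K1) ha hb.
  exists (a' / b'); split.
  + exists a', b'; split => //; [exists ma | exists mb] => //.
  + apply/vcloseI.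
    have -> : a' / b' - z = (a' / b' - a / b) + (r - z) by rewrite er; ring.
    apply: (Ile (j := k0)); first by rewrite le_max lexx.
    apply: (ID hK hcl). exact/vcloseI.
Qed.
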